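(* Let $h=z+\sum_{l\ge1}h_lz^{-l}$ be a formal Laurent series with complex coefficients $h_l$, put $\lambda=z^2$, and let $H^{(k)}$ and $V^{(j)}$ be as defined in the context below. Then for every integer $k\ge0$: (1) the entries of $V^{(2k+1)}$ are polynomials in $\lambda$ whose coefficients depend only on $(h_1,\dots,h_{2k+1})$, and the map $(h_1,\dots,h_{2k+1})\mapsto V^{(2k+1)}$ is injective; (2) $\mathrm{Tr}\,V^{(2k+1)}=0$; (3) for every integer $0\le i\le k$, $$V^{(2i+1)}=\big(\lambda^{i-k}V^{(2k+1)}\big)_+-\alpha_{ik}\begin{pmatrix}0&0\\1&0\end{pmatrix},$$ where $(\cdot)_+$ denotes the projection onto the nonnegative powers of $\lambda$ (applied entrywise), and $\alpha_{ik}$ is the $(1,2)$ entry of the coefficient of $\lambda^{k-i-1}$ in $V^{(2k+1)}$ (the coefficient of $\lambda^{-1}$ being $0$).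
   Context: Given $h=z+\sum_{l\ge1}h_lz^{-l}$, define Laurent series $H^{(k)}$, $k\ge0$, by $H^{(0)}=1$, $H^{(1)}=h$, $H^{(2)}=z^2$ and recursively $H^{(k+2)}=z^2H^{(k)}-H^k_1H^{(1)}-H^k_2$ for $k\ge1$, where $H^k_l$ denotes the coefficient of $z^{-l}$ in $H^{(k)}$ (so $H^{(k)}=z^k+\sum_{l\ge1}H^k_lz^{-l}$ and $H^1_l=h_l$). Every $H^{(k)}$, and every series $H^{(j+1)}+\sum_{l=1}^jh_lH^{(j-l)}+H^j_1$, can be written uniquely as $a(\lambda)+b(\lambda)h$ with $a,b$ polynomials in $\lambda=z^2$ (uniqueness because the elements $\lambda^j,\lambda^jh$, $j\ge0$, are linearly independent). For $j\ge1$, $V^{(j)}$ is the $2\times2$ matrix with polynomial entries in $\lambda$ whose first row is $(p_j,q_j)$, where $H^{(j)}=p_j(\lambda)+q_j(\lambda)h$, and whose second row is $(a_j,b_j)$, where $H^{(j+1)}+\sum_{l=1}^jh_lH^{(j-l)}+H^j_1=a_j(\lambda)+b_j(\lambda)h$. Equivalently, $V^{(j)}$ is defined by $\big(\partial_{t_j}+H^{(j)}\big)(1,h)^T=V^{(j)}(1,h)^T$, where $\partial h/\partial t_j=-hH^{(j)}+H^{(j+1)}+\sum_{l=1}^jh_lH^{(j-l)}+H^j_1$. For example $V^{(1)}=\begin{pmatrix}0&1\\ \lambda+2h_1&0\end{pmatrix}$. *)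

(* Defs.v *)
From HB Require Import structures.
From mathcomp Require Import all_boot all_algebra.
From mathcomp Require Import reals.
From mathcomp Require Export complex.
From Stdlib Require Import ClassicalEpsilon.

Set Implicit Arguments.
Unset Strict Implicit.
Unset Printing Implicit Defensive.

Import GRing.Theory Num.Theory.
Local Open Scope ring_scope.

Section Laurent.
Variable R : realType.
Local Notation C := (R[i]).

(* A Laurent series in z is represented by its coefficient function:
   [s n] is the coefficient of z^n (n : int).  All series below have
   support bounded above; only shifts and finite linear combinations
   are ever used, so no infinite sums arise. *)
Definition series := int -> C.

Definition sadd (s t : series) : series := fun n => s n + t n.
Definition sscale (c : C) (s : series) : series := fun n => c * s n.
Definition smono (m : int) : series := fun n => if n == m then 1 else 0.
Definition sz2 (s : series) : series := fun n => s (n - 2).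

(* h = z + \sum_{l>=1} h_l z^{-l}; hc l = h_l (hc 0 is irrelevant). *)
Definition hser (hc : nat -> C) : series :=
  fun n => match n with
           | Posz 1 => 1
           | Posz _ => 0
           | Negz m => hc m.+1   (* Negz m = -(m+1) *)
           end.

Definition coefneg (s : series) (l : nat) : C := s (- (l%:Z)).

Fixpoint Hser (hc : nat -> C) (k : nat) : series :=
  match k with
  | 0 => smono 0
  | 1 => hser hc
  | k'.+2 =>
      if k' is 0 then smono 2
      else sadd (sz2 (Hser hc k'))
             (sadd (sscale (- coefneg (Hser hc k') 1) (hser hc))
                   (sscale (- coefneg (Hser hc k') 2) (smono 0)))
  end.

(* the series p(lambda), lambda = z^2 *)
Definition spoly (p : {poly C}) : series :=
  fun n => match n with
           | Posz m => if odd m then 0 else p`_(m./2)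
           | Negz _ => 0
           end.

Definition spolymul (p : {poly C}) (s : series) : series :=
  fun n => \sum_(i < size p) p`_i * s (n - (2 * i)%N%:Z).

Definition repr_ab (hc : nat -> C) (a b : {poly C}) (s : series) : Prop :=
  forall n : int, s n = spoly a n + spolymul b (hser hc) n.

Definition row2ser (hc : nat -> C) (j : nat) : series :=
  sadd (Hser hc j.+1)
   (sadd (fun n => \sum_(1 <= l < j.+1) hc l * Hser hc (j - l) n)
         (sscale (coefneg (Hser hc j) 1) (smono 0))).

Definition isV (hc : nat -> C) (j : nat) (M : 'M[{poly C}]_2) : Prop :=
  repr_ab hc (M 0 0) (M 0 1) (Hser hc j) /\
  repr_ab hc (M 1 0) (M 1 1) (row2ser hc j).

(* V^{(j)}: the (unique) matrix with the defining property. *)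
Definition Vmat (hc : nat -> C) (j : nat) : 'M[{poly C}]_2 :=
  epsilon (inhabits 0) (isV hc j).

Definition posproj (d : nat) (M : 'M[{poly C}]_2) : 'M[{poly C}]_2 :=
  map_mx (drop_poly d) M.

Definition alpha (hc : nat -> C) (i k : nat) : C :=
  if (i < k)%N then ((Vmat hc k.*2.+1) 0 1)`_(k - i).-1 else 0.

Definition E21 : 'M[{poly C}]_2 := \matrix_(a < 2, b < 2)
  (if (a == 1 :> nat) && (b == 0 :> nat) then 1 else 0).

End Laurent.

(* Main.v *)
Require Import Defs.
From mathcomp Require Import all_boot all_algebra.
From mathcomp Require Import reals complex.
From mathcomp Require Import zify ring.
From Stdlib Require Import ClassicalEpsilon.
Import GRing.Theory Num.Theory.
Local Open Scope ring_scope.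

Lemma spolymulE {R : realType} (p : {poly R[i]}) (F : series R) n N :
  (size p <= N)%N ->
  spolymul p F n = \sum_(i < N) p`_i * F (n - (2 * i)%N%:Z).
Proof.
move=> le; rewrite /spolymul (big_ord_widen N (fun i => p`_i * F (n - (2 * i)%N%:Z)) le).
rewrite big_mkcond; apply: eq_bigr => i _; case: ifP => // /negbT.
by rewrite -leqNgt => /(nth_default 0) ->; rewrite mul0r.
Qed.

Lemma sm_add {R : realType} (p q : {poly R[i]}) F n :
  spolymul (p + q) F n = spolymul p F n + spolymul q F n.
Proof.
set N := maxn (size p) (size q).
rewrite !(@spolymulE _ _ _ _ N) ?leq_maxl ?leq_maxr //; last by apply: leq_trans (size_polyD _ _) _.
by rewrite -big_split; apply: eq_bigr => i _; rewrite coefD mulrDl.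
Qed.

Lemma sm_scale {R : realType} (c : R[i]) (p : {poly R[i]}) F n :
  spolymul (c *: p) F n = c * spolymul p F n.
Proof.
rewrite !(@spolymulE _ _ _ _ (size p)) ?size_scale_leq // mulr_sumr.
by apply: eq_bigr => i _; rewrite coefZ mulrA.
Qed.

Lemma sm_opp {R : realType} (p : {poly R[i]}) F n :
  spolymul (- p) F n = - spolymul p F n.
Proof. by rewrite -scaleN1r sm_scale mulN1r. Qed.

Lemma sm_sub {R : realType} (p q : {poly R[i]}) F n :
  spolymul (p - q) F n = spolymul p F n - spolymul q F n.
Proof. by rewrite sm_add sm_opp. Qed.

Lemma sm0 {R : realType} F n : spolymul (0 : {poly R[i]}) F n = 0.
Proof. by rewrite /spolymul size_poly0 big_ord0. Qed.

Lemma sm_C {R : realType} (c : R[i]) F n : spolymul c%:P F n = c * F n.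
Proof.
rewrite (@spolymulE _ _ _ _ 1) ?size_polyC_leq1 // big_ord1 coefC /=.
by rewrite subr0.
Qed.

Lemma sm_X {R : realType} (p : {poly R[i]}) F n :
  spolymul (p * 'X) F n = spolymul p F (n - 2).
Proof.
rewrite (@spolymulE _ _ _ _ (size p).+1); last first.
  by apply: leq_trans (size_polyMleq _ _) _; rewrite size_polyX addn2.
rewrite big_ord_recl coefMX /= mul0r add0r (@spolymulE _ _ _ _ (size p)) //.
apply: eq_bigr => i _; rewrite coefMX /=; congr (_ * F _); rewrite /bump /=; lia.
Qed.

Lemma sm_split {R : realType} (p : {poly R[i]}) F n d :
  spolymul p F n = \sum_(i < d) p`_i * F (n - (2 * i)%N%:Z)
                   + spolymul (drop_poly d p) F (n - (2 * d)%N%:Z).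
Proof.
rewrite (@spolymulE _ _ _ _ (d + size p)) ?leq_addl // big_split_ord /=.
congr (_ + _); rewrite (@spolymulE _ _ _ _ (size p)) ?size_drop_poly ?leq_subr //.
by apply: eq_bigr => i _; rewrite coef_drop_poly (addnC i d); congr (_ * F _); rewrite mulnDr PoszD opprD addrA.
Qed.

Lemma smono0_sub {R : realType} (x y : nat) : smono R 0 (x%:Z - y%:Z) = (x == y)%:R.
Proof.
rewrite /smono; have -> : (x%:Z - y%:Z == 0) = (x == y) by apply/eqP/eqP; lia.
by case: (x == y).
Qed.

Lemma hser_pos {R : realType} (hc : nat -> R[i]) (x : nat) : hser hc x = (x == 1)%:R.
Proof. by case: x => [|[|x]]. Qed.

Lemma hser_sub {R : realType} (hc : nat -> R[i]) (x y : nat) :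
  hser hc (x%:Z - y%:Z) = if (y <= x)%N then ((x - y)%N == 1)%:R else hc (y - x)%N.
Proof.
case: leqP => H.
  by rewrite subzn // hser_pos.
have -> : x%:Z - y%:Z = Negz (y - x).-1 by rewrite NegzE; lia.
by rewrite /= prednK // subn_gt0.
Qed.

Lemma hser_z {R : realType} (hc : nat -> R[i]) (x : int) :
  0 <= x -> x != 1 -> hser hc x = 0.
Proof. by case: x => [[|[|x]]|x]. Qed.

Lemma smono_z {R : realType} (x : int) : x != 0 -> smono R 0 x = 0.
Proof. by rewrite /smono => /negbTE ->. Qed.

Lemma spolyE {R : realType} (a : {poly R[i]}) n : spoly a n = spolymul a (smono R 0) n.
Proof.
rewrite /spolymul; case: n => [m|m].
  rewrite (eq_bigr (fun i : 'I_ _ => if (~~ odd m) && (i == m./2 :> nat) then a`_i else 0)); last first.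
    move=> i _; rewrite smono0_sub.
    have -> : (m == 2 * i)%N = (~~ odd m) && (i == m./2 :> nat).
      move: (nat_of_ord i) => j; have := odd_double_half m.
      by case: (odd m) => /= E; [apply/eqP | apply/eqP/eqP]; lia.
    by case: ifP; rewrite ?mulr1 ?mulr0.
  rewrite -big_mkcond (big_ord1_cond_eq _ (fun j => a`_j) (fun _ => ~~ odd m)) /=.
  case: (odd m); rewrite ?andbF //= andbT; case: ltnP => // H.
  by rewrite nth_default.
rewrite big1 // => i _; rewrite smono_z ?mulr0 //; rewrite NegzE; apply/eqP; lia.
Qed.

Definition phi {R : realType} (hc : nat -> R[i]) (a b : {poly R[i]}) : series R :=
  fun n => spoly a n + spolymul b (hser hc) n.

Lemma phiE {R : realType} (hc : nat -> R[i]) a b n :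
  phi hc a b n = spolymul a (smono R 0) n + spolymul b (hser hc) n.
Proof. by rewrite /phi spolyE. Qed.

Lemma phi_add {R : realType} (hc : nat -> R[i]) a b a' b' n :
  phi hc (a + a') (b + b') n = phi hc a b n + phi hc a' b' n.
Proof. rewrite !phiE !sm_add; ring. Qed.

Lemma phi_sub {R : realType} (hc : nat -> R[i]) a b a' b' n :
  phi hc (a - a') (b - b') n = phi hc a b n - phi hc a' b' n.
Proof. rewrite !phiE !sm_sub; ring. Qed.

Lemma phi_scale {R : realType} (hc : nat -> R[i]) c a b n :
  phi hc (c *: a) (c *: b) n = c * phi hc a b n.
Proof. rewrite !phiE !sm_scale; ring. Qed.

Lemma phi0 {R : realType} (hc : nat -> R[i]) n : phi hc 0 0 n = 0.
Proof. by rewrite phiE !sm0 addr0. Qed.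

Lemma phiX {R : realType} (hc : nat -> R[i]) a b n :
  phi hc (a * 'X) (b * 'X) n = phi hc a b (n - 2).
Proof. by rewrite !phiE !sm_X. Qed.

Lemma phiC1 {R : realType} (hc : nat -> R[i]) c n :
  phi hc c%:P 0 n = c * smono R 0 n.
Proof. by rewrite phiE sm0 sm_C addr0. Qed.

Lemma phiC2 {R : realType} (hc : nat -> R[i]) c n :
  phi hc 0 c%:P n = c * hser hc n.
Proof. by rewrite phiE sm0 sm_C add0r. Qed.

Lemma spoly_odd {R : realType} (a : {poly R[i]}) (m : nat) : spoly a (Posz (2 * m).+1) = 0.
Proof. by rewrite /spoly /= mul2n odd_double. Qed.

Lemma spoly_even {R : realType} (a : {poly R[i]}) (m : nat) : spoly a (Posz (2 * m)) = a`_m.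
Proof. by rewrite /spoly mul2n odd_double /= doubleK. Qed.

Lemma mx2_eq {T : Type} (A B : 'M[T]_2) :
  A 0 0 = B 0 0 -> A 0 1 = B 0 1 -> A 1 0 = B 1 0 -> A 1 1 = B 1 1 -> A = B.
Proof.
move=> h00 h01 h10 h11; apply/matrixP => x y.
case: x => [[|[|//]] Hx]; case: y => [[|[|//]] Hy].
- have E : Ordinal Hx = 0 by apply: val_inj.
  have E' : Ordinal Hy = 0 by apply: val_inj.
  by rewrite ?E ?E'.
- have E : Ordinal Hx = 0 by apply: val_inj.
  have E' : Ordinal Hy = 1 by apply: val_inj.
  by rewrite ?E ?E'.
- have E : Ordinal Hx = 1 by apply: val_inj.
  have E' : Ordinal Hy = 0 by apply: val_inj.
  by rewrite ?E ?E'.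
- have E : Ordinal Hx = 1 by apply: val_inj.
  have E' : Ordinal Hy = 1 by apply: val_inj.
  by rewrite ?E ?E'.
Qed.

Lemma sm_odd_inj {R : realType} (hc : nat -> R[i]) (b : {poly R[i]}) :
  (forall m : nat, spolymul b (hser hc) (Posz (2 * m).+1) = 0) -> b = 0.
Proof.
move=> H; apply/eqP; apply: contraT => nz.
set d := (size b).-1.
have Hs : size b = d.+1 by rewrite prednK // size_poly_gt0.
have := H d; rewrite (@spolymulE _ _ _ _ d.+1); last by rewrite Hs.
rewrite big_ord_recr /= big1 => [|i _].
  rewrite add0r hser_sub leqnSn /=.
  have -> : ((2 * d).+1 - 2 * d)%N = 1%N by lia.
  rewrite mulr1 => bd.
  by move: nz; rewrite -lead_coef_eq0 lead_coefE -/d bd eqxx.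
rewrite hser_sub.
have -> : (2 * widen_ord (leqnSn d) i <= (2 * d).+1)%N = true.
  by move: (ltn_ord i); rewrite /=; lia.
have -> : ((2 * d).+1 - 2 * widen_ord (leqnSn d) i == 1)%N = false.
  by move: (ltn_ord i); rewrite /=; move: (nat_of_ord i) => j Hj; apply/eqP; lia.
by rewrite mulr0.
Qed.

Lemma phi_zero {R : realType} (hc : nat -> R[i]) a b :
  (forall n : nat, phi hc a b n = 0) -> a = 0 /\ b = 0.
Proof.
move=> H.
have hb : b = 0.
  by apply: (sm_odd_inj hc) => m; have := H (2 * m).+1; rewrite /phi spoly_odd add0r.
split => //; apply/polyP => m; rewrite coef0.
by have := H (2 * m)%N; rewrite /phi hb sm0 addr0 spoly_even.
Qed.

Lemma phi_inj {R : realType} (hc : nat -> R[i]) a b a' b' :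
  (forall n : nat, phi hc a b n = phi hc a' b' n) -> a = a' /\ b = b'.
Proof.
move=> H; have [] := phi_zero hc (a - a') (b - b').
  by move=> n; rewrite phi_sub H subrr.
by move=> /eqP; rewrite subr_eq0 => /eqP -> /eqP; rewrite subr_eq0 => /eqP ->.
Qed.

Lemma HserSS {R : realType} (hc : nat -> R[i]) m n :
  Hser hc m.+2 n = Hser hc m (n - 2) - coefneg (Hser hc m) 1 * hser hc n
                   - coefneg (Hser hc m) 2 * smono R 0 n.
Proof.
case: m => [|m].
  rewrite /= /coefneg /smono.
  have -> : (n - 2 == 0) = (n == 2) by rewrite subr_eq0.
  by rewrite /= !mul0r !subr0.
by rewrite /= /sadd /sscale /sz2 !mulNr !addrA.
Qed.

Lemma Hpos {R : realType} (hc : nat -> R[i]) m (n : nat) : Hser hc m n = (n == m)%:R.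
Proof.
elim/ltn_ind: m n => m IH n; case: m IH => [|[|m]] IH.
- by rewrite /= /smono; case: n.
- exact: hser_pos.
rewrite HserSS; case: n => [|[|n]].
- have -> : (Posz 0 - 2) = - (2%N%:Z) by [].
  have -> : hser hc (Posz 0) = 0 by [].
  have -> : smono R 0 (Posz 0) = 1 by [].
  by rewrite /coefneg mulr0 subr0 mulr1 subrr.
- have -> : (Posz 1 - 2) = - (1%N%:Z) by [].
  have -> : hser hc (Posz 1) = 1 by [].
  have -> : smono R 0 (Posz 1) = 0 by [].
  by rewrite /coefneg mulr0 subr0 mulr1 subrr.
- have -> : (Posz n.+2 - 2) = Posz n by lia.
  rewrite IH // hser_pos.
  have -> : smono R 0 (Posz n.+2) = 0 by [].
  by rewrite mulr0 mulr0 !subr0.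
Qed.

Lemma phiCC {R : realType} (hc : nat -> R[i]) c d n :
  phi hc c%:P d%:P n = c * smono R 0 n + d * hser hc n.
Proof. by rewrite phiE !sm_C. Qed.

Lemma HserA {R : realType} (hc : nat -> R[i]) m :
  exists p q, forall n, Hser hc m n = phi hc p q n.
Proof.
elim/ltn_ind: m => m IH; case: m IH => [|[|m]] IH.
- by exists 1%:P, 0 => n; rewrite phiC1 mul1r.
- by exists 0, 1%:P => n; rewrite phiC2 mul1r.
have [p [q H]] := IH m (ltnW (ltnSn m.+1)).
exists (p * 'X - (coefneg (Hser hc m) 2)%:P), (q * 'X - (coefneg (Hser hc m) 1)%:P).
move=> n; rewrite HserSS phi_sub phiX phiCC -H; ring.
Qed.

Definition inA {R : realType} (hc : nat -> R[i]) (s : series R) :=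
  exists a b, forall n, s n = phi hc a b n.

Lemma inA_add {R : realType} (hc : nat -> R[i]) s t :
  inA hc s -> inA hc t -> inA hc (fun n => s n + t n).
Proof.
move=> [a [b Hs]] [a' [b' Ht]]; exists (a + a'), (b + b') => n.
by rewrite phi_add Hs Ht.
Qed.

Lemma inA_scale {R : realType} (hc : nat -> R[i]) c s :
  inA hc s -> inA hc (fun n => c * s n).
Proof.
move=> [a [b Hs]]; exists (c *: a), (c *: b) => n.
by rewrite phi_scale Hs.
Qed.

Lemma inA_sum {R : realType} (hc : nat -> R[i]) (r : seq nat) (F : nat -> series R) :
  (forall l, inA hc (F l)) -> inA hc (fun n => \sum_(l <- r) F l n).
Proof.
move=> HF; elim: r => [|x r IH].
  by exists 0, 0 => n; rewrite big_nil phi0.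
have := @inA_add _ hc _ _ (HF x) IH; move=> [a [b H]]; exists a, b => n.
by rewrite big_cons H.
Qed.

Lemma row2A {R : realType} (hc : nat -> R[i]) j : inA hc (row2ser hc j).
Proof.
rewrite /row2ser /sadd /sscale.
apply: inA_add; first exact: HserA.
apply: inA_add.
  apply: (@inA_sum _ hc _ (fun l n => hc l * Hser hc (j - l) n)) => l.
  by apply: inA_scale; apply: HserA.
by apply: inA_scale; apply: (HserA hc 0).
Qed.

Definition mk2 {T : Type} (a b c d : T) : 'M[T]_2 :=
  \matrix_(x < 2, y < 2) (if x == 0 then (if y == 0 then a else b) else (if y == 0 then c else d)).

Lemma VmatP {R : realType} (hc : nat -> R[i]) j : isV hc j (Vmat hc j).
Proof.
apply: epsilon_spec.
have [p [q H1]] := HserA hc j.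
have [a [b H2]] := row2A hc j.
exists (mk2 p q a b); split => n; rewrite /mk2 !mxE /=.
  exact: H1.
exact: H2.
Qed.

Lemma Vchar {R : realType} (hc : nat -> R[i]) j (M : 'M[{poly R[i]}]_2) :
  (forall n : nat, phi hc (M 0 0) (M 0 1) n = Hser hc j n) ->
  (forall n : nat, phi hc (M 1 0) (M 1 1) n = row2ser hc j n) ->
  Vmat hc j = M.
Proof.
move=> HM1 HM2; have [H1 H2] := VmatP hc j.
have [e00 e01] : Vmat hc j 0 0 = M 0 0 /\ Vmat hc j 0 1 = M 0 1.
  by apply: (phi_inj hc) => n; rewrite HM1 H1.
have [e10 e11] : Vmat hc j 1 0 = M 1 0 /\ Vmat hc j 1 1 = M 1 1.
  by apply: (phi_inj hc) => n; rewrite HM2 H2.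
exact: mx2_eq.
Qed.

Lemma VH {R : realType} (hc : nat -> R[i]) j n :
  Hser hc j n = phi hc (Vmat hc j 0 0) (Vmat hc j 0 1) n.
Proof. by have [H1 _] := VmatP hc j; apply: H1. Qed.

Lemma VR {R : realType} (hc : nat -> R[i]) j n :
  row2ser hc j n = phi hc (Vmat hc j 1 0) (Vmat hc j 1 1) n.
Proof. by have [_ H2] := VmatP hc j; apply: H2. Qed.

Lemma row2pos {R : realType} (hc : nat -> R[i]) j (n : nat) :
  row2ser hc j (Posz n) = (n == j.+1)%:R + (if (n < j)%N then hc (j - n)%N else 0)
                          + coefneg (Hser hc j) 1 * (n == 0)%:R.
Proof.
rewrite /row2ser /sadd /sscale Hpos.
have -> : smono R 0 (Posz n) = (n == 0)%:R by rewrite /smono; case: n.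
rewrite addrA; congr (_ + _ + _).
under eq_bigr => l _ do rewrite Hpos.
case: ltnP => H.
  rewrite (bigD1_seq (j - n)%N) ?mem_index_iota ?iota_uniq //=; last by lia.
  rewrite subKn ?(ltnW H) // eqxx mulr1 big1_seq ?addr0 // => l /andP[ne].
  rewrite mem_index_iota => Hl.
  have -> : (n == j - l)%N = false by apply/negP => /eqP E; move/eqP: ne; apply; lia.
  by rewrite mulr0.
rewrite big1_seq // => l /andP[_]; rewrite mem_index_iota => Hl.
have -> : (n == j - l)%N = false by apply/negP => /eqP E; lia.
by rewrite mulr0.
Qed.

Lemma Vrec {R : realType} (hc : nat -> R[i]) m :
  Vmat hc m.+2 0 0 = Vmat hc m 0 0 * 'X - (coefneg (Hser hc m) 2)%:P /\
  Vmat hc m.+2 0 1 = Vmat hc m 0 1 * 'X - (coefneg (Hser hc m) 1)%:P.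
Proof.
apply: (phi_inj hc) => n.
rewrite -VH HserSS phi_sub phiX phiCC -VH; ring.
Qed.

Lemma V1 {R : realType} (hc : nat -> R[i]) :
  Vmat hc 1 0 0 = 0 /\ Vmat hc 1 0 1 = 1.
Proof.
apply: (phi_inj hc) => n.
by rewrite -VH -polyC1 phiC2 mul1r.
Qed.

Lemma size_XC {R : realType} (p : {poly R[i]}) c s :
  (size p <= s)%N -> (size (p * 'X - c%:P)%R <= s.+1)%N.
Proof.
move=> H; apply: leq_trans (size_polyD _ _) _; rewrite size_polyN geq_max; apply/andP; split.
  by apply: leq_trans (size_polyMleq _ _) _; rewrite size_polyX addn2 /= ltnS.
by apply: leq_trans (size_polyC_leq1 _) _.
Qed.

Lemma Vsize {R : realType} (hc : nat -> R[i]) k :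
  (size (Vmat hc k.*2.+1 0 0)%R <= k.+1)%N /\ (size (Vmat hc k.*2.+1 0 1)%R <= k.+1)%N.
Proof.
elim: k => [|k [IH1 IH2]].
  by have [-> ->] := V1 hc; rewrite size_poly0 size_poly1.
have [-> ->] := Vrec hc k.*2.+1.
by split; apply: size_XC.
Qed.

Lemma phi_drop {R : realType} (hc : nat -> R[i]) a b d (n : nat) :
  phi hc (drop_poly d a) (drop_poly d b) (Posz n) = phi hc a b (Posz (n + 2 * d)).
Proof.
rewrite !phiE (sm_split a _ (Posz (n + 2 * d)) d) (sm_split b _ (Posz (n + 2 * d)) d).
have -> : Posz (n + 2 * d) - (2 * d)%N%:Z = Posz n by lia.
rewrite !big1 ?add0r // => i _; move: (ltn_ord i); move: (nat_of_ord i) => j Hj.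
  by rewrite hser_z ?mulr0 //; apply/negP; lia.
by rewrite smono_z ?mulr0 //; apply/negP; lia.
Qed.

Lemma row1_drop {R : realType} (hc : nat -> R[i]) i k : (i <= k)%N ->
  Vmat hc i.*2.+1 0 0 = drop_poly (k - i) (Vmat hc k.*2.+1 0 0) /\
  Vmat hc i.*2.+1 0 1 = drop_poly (k - i) (Vmat hc k.*2.+1 0 1).
Proof.
move=> H; apply: (phi_inj hc) => n.
rewrite -VH phi_drop -VH !Hpos.
have -> : (n + 2 * (k - i) == k.*2.+1)%N = (n == i.*2.+1)%N by apply/eqP/eqP; lia.
by [].
Qed.

Lemma alpha_val {R : realType} (hc : nat -> R[i]) i k : (i < k)%N ->
  alpha hc i k = - coefneg (Hser hc i.*2.+1) 1.
Proof.
move=> H; rewrite /alpha H.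
have [_ e] := row1_drop hc i.+1 k H.
have [_ r] := Vrec hc i.*2.+1.
have -> : (k - i).-1 = (0 + (k - i.+1))%N by lia.
rewrite -coef_drop_poly -e.
rewrite (_ : Vmat hc (i.+1).*2.+1 = Vmat hc (i.*2.+1).+2) //.
by rewrite r coefB coefMX coefC /= sub0r.
Qed.

Lemma rhs_entry {R : realType} (V : 'M[{poly R[i]}]_2) d c x y :
  (posproj d V - c%:P *: E21 R) x y =
  drop_poly d (V x y) - (if (x == 1 :> nat) && (y == 0 :> nat) then c%:P else 0).
Proof. by rewrite /posproj /E21 !mxE; case: ifP; rewrite ?mulr1 ?mulr0. Qed.

Lemma phi_subC {R : realType} (hc : nat -> R[i]) a b c n :
  phi hc (a - c%:P) b n = phi hc a b n - c * smono R 0 n.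
Proof. rewrite !phiE sm_sub sm_C; ring. Qed.

Lemma thm3 {R : realType} (hc : nat -> R[i]) i k : (i <= k)%N ->
  Vmat hc i.*2.+1 = posproj (k - i) (Vmat hc k.*2.+1) - (alpha hc i k)%:P *: E21 R.
Proof.
move=> H; have [e0 e1] := row1_drop hc i k H.
apply: Vchar => n; rewrite !rhs_entry /= ?subr0.
  by rewrite -e0 -e1 -VH.
rewrite phi_subC phi_drop -VR !row2pos.
have -> : smono R 0 (Posz n) = (n == 0)%:R by rewrite /smono; case: n.
case: (ltnP i k) => Hik; last first.
  have Eik : i = k by apply/eqP; rewrite eqn_leq H Hik.
  by rewrite Eik subnn muln0 addn0 /alpha ltnn mul0r subr0.
rewrite alpha_val //.
have -> : (n + 2 * (k - i) == k.*2.+2)%N = (n == i.*2.+2)%N by apply/eqP/eqP; lia.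
have -> : (n + 2 * (k - i) < k.*2.+1)%N = (n < i.*2.+1)%N by apply/idP/idP; lia.
have -> : (k.*2.+1 - (n + 2 * (k - i)))%N = (i.*2.+1 - n)%N by lia.
have -> : (n + 2 * (k - i) == 0)%N = false by apply/negP => /eqP; lia.
by rewrite mulr0 addr0 mulNr opprK.
Qed.

Lemma hser_zero_nat {R : realType} (hc : nat -> R[i]) (x y : nat) :
  (y <= x)%N -> (x - y)%N != 1%N -> hser hc (x%:Z - y%:Z) = 0.
Proof. by move=> H1 H2; rewrite hser_sub H1 (negbTE H2). Qed.

Definition g1 {R : realType} (hc : nat -> R[i]) (t m i : nat) :=
  hser hc (Posz (2 * i).+1 - Posz (2 * t)) * hser hc (Posz (2 * m) - Posz (2 * i)).
Definition g2 {R : realType} (hc : nat -> R[i]) (t m i : nat) :=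
  hser hc (Posz (2 * i) - Posz (2 * t)) * hser hc (Posz (2 * m).+1 - Posz (2 * i)).

Lemma g1z {R : realType} (hc : nat -> R[i]) t m i : ~~ (m < i <= t)%N -> g1 hc t m i = 0.
Proof.
move=> Hn; rewrite /g1; case: (leqP i m) => H.
  rewrite [X in _ * X](@hser_zero_nat _ hc (2 * m) (2 * i)); [by rewrite mulr0 | lia | apply/eqP; lia].
have Hit : (t < i)%N by move: Hn; rewrite H /= -ltnNge.
rewrite (@hser_zero_nat _ hc (2 * i).+1 (2 * t)); [by rewrite mul0r | lia | apply/eqP; lia].
Qed.

Lemma g2z {R : realType} (hc : nat -> R[i]) t m i : ~~ (m <= i < t)%N -> g2 hc t m i = 0.
Proof.
move=> Hn; rewrite /g2; case: (ltnP i t) => H.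
  have Him : (i < m)%N by move: Hn; rewrite H andbT -ltnNge.
  rewrite [X in _ * X](@hser_zero_nat _ hc (2 * m).+1 (2 * i)); [by rewrite mulr0 | lia | apply/eqP; lia].
rewrite (@hser_zero_nat _ hc (2 * i) (2 * t)); [by rewrite mul0r | lia | apply/eqP; lia].
Qed.

Lemma g12 {R : realType} (hc : nat -> R[i]) t m i : (m <= i < t)%N ->
  g1 hc t m i.+1 = g2 hc t m (m + t - i.+1).
Proof.
move=> /andP[H1 H2]; rewrite /g1 /g2 mulrC; congr (hser hc _ * hser hc _); lia.
Qed.

Lemma Dlem {R : realType} (hc : nat -> R[i]) (N m t : nat) : (t < N)%N ->
  \sum_(i < N) g1 hc t m i = \sum_(i < N) g2 hc t m i.
Proof.
move=> HtN.
rewrite -(big_mkord xpredT (g1 hc t m)) -(big_mkord xpredT (g2 hc t m)).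
case: (leqP t m) => Htm.
  rewrite big1_seq; last by move=> i _; apply: g1z; apply/negP => /andP[]; lia.
  by rewrite big1_seq // => i _; apply: g2z; apply/negP => /andP[]; lia.
rewrite (@big_cat_nat _ _ _ m.+1 0 N) //; last lia.
rewrite (@big_cat_nat _ _ _ t.+1 m.+1 N); [|lia|lia].
rewrite [RHS](@big_cat_nat _ _ _ m 0 N) //; last lia.
rewrite [X in _ = _ + X](@big_cat_nat _ _ _ t m N); [|lia|lia].
have -> : \sum_(0 <= i < m.+1) g1 hc t m i = 0.
  by rewrite big1_seq // => i /andP[_]; rewrite mem_index_iota => Hi; apply: g1z; apply/negP => /andP[]; lia.
have -> : \sum_(t.+1 <= i < N) g1 hc t m i = 0.
  by rewrite big1_seq // => i /andP[_]; rewrite mem_index_iota => Hi; apply: g1z; apply/negP => /andP[]; lia.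
have -> : \sum_(0 <= i < m) g2 hc t m i = 0.
  by rewrite big1_seq // => i /andP[_]; rewrite mem_index_iota => Hi; apply: g2z; apply/negP => /andP[]; lia.
have -> : \sum_(t <= i < N) g2 hc t m i = 0.
  by rewrite big1_seq // => i /andP[_]; rewrite mem_index_iota => Hi; apply: g2z; apply/negP => /andP[]; lia.
rewrite !Monoid.simpm big_add1 /= (big_nat_rev _ _ m t).
apply: eq_big_nat => i /andP[H1 H2]; rewrite g12; last by apply/andP; split; lia.
by congr (g2 _ _ _ _); lia.
Qed.

Lemma dsum {R : realType} (hc : nat -> R[i]) (P Q : {poly R[i]}) k :
  (size P <= k.+1)%N -> (size Q <= k.+1)%N ->
  (forall n : nat, phi hc P Q (Posz n) = (n == k.*2.+1)%:R) ->
  forall m : nat, hser hc (Posz (2 * m) - Posz (2 * k)) + spolymul P (hser hc) (Posz (2 * m).+1) = 0.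
Proof.
move=> sP sQ H m.
have O i : \sum_(t < k.+1) Q`_t * hser hc (Posz (2 * i).+1 - Posz (2 * t)) = (i == k)%:R.
  have := H (2 * i).+1; rewrite /phi spoly_odd add0r (spolymulE _ _ _ _ sQ) => ->.
  by congr (_%:R); apply/eqP/eqP; lia.
have E i : P`_i = - \sum_(t < k.+1) Q`_t * hser hc (Posz (2 * i) - Posz (2 * t)).
  have := H (2 * i)%N; rewrite /phi spoly_even (spolymulE _ _ _ _ sQ).
  have -> : ((2 * i)%N == k.*2.+1) = false by apply/negP => /eqP; lia.
  by move/eqP; rewrite addr_eq0 => /eqP.
rewrite (spolymulE _ _ _ _ sP).
have -> : hser hc (Posz (2 * m) - Posz (2 * k)) =
    \sum_(i < k.+1) (i == k :> nat)%:R * hser hc (Posz (2 * m) - Posz (2 * i)).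
  rewrite big_ord_recr /= eqxx mul1r big1 ?add0r // => i _.
  by rewrite ltn_eqF ?mul0r.
under eq_bigr => i _ do rewrite -(O i).
under [X in _ + X]eq_bigr => i _ do rewrite E.
rewrite -big_split /=.
rewrite (eq_bigr (fun i : 'I_k.+1 => \sum_(t < k.+1) Q`_t * (g1 hc t m i - g2 hc t m i))); last first.
  move=> i _; rewrite mulNr !mulr_suml -sumrN -big_split /=; apply: eq_bigr => t _.
  rewrite /g1 /g2; ring.
rewrite exchange_big /= big1 // => t _.
by rewrite -mulr_sumr sumrB Dlem ?subrr ?mulr0.
Qed.

Lemma Vtrace {R : realType} (hc : nat -> R[i]) k :
  Vmat hc k.*2.+1 1 1 = - Vmat hc k.*2.+1 0 0.
Proof.
have [sP sQ] := Vsize hc k.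
have HPQ : forall n : nat, phi hc (Vmat hc k.*2.+1 0 0) (Vmat hc k.*2.+1 0 1) n = (n == k.*2.+1)%:R.
  by move=> n; rewrite -VH Hpos.
have D := dsum hc _ _ _ sP sQ HPQ.
apply/eqP; rewrite -addr_eq0; apply/eqP.
apply: (sm_odd_inj hc) => m.
rewrite sm_add.
have := VR hc k.*2.+1 (Posz (2 * m).+1); rewrite row2pos /phi spoly_odd add0r => <-.
rewrite (_ : ((2 * m).+1 == k.*2.+2)%N = false); last by apply/negP => /eqP; lia.
rewrite (_ : ((2 * m).+1 == 0)%N = false) //= mulr0n mulr0 addr0 add0r.
rewrite -[RHS](D m); congr (_ + _).
rewrite hser_sub.
have -> : ((2 * m).+1 < k.*2.+1)%N = (m < k)%N by apply/idP/idP; lia.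
have -> : (2 * k <= 2 * m)%N = ~~ (m < k)%N by rewrite -leqNgt; apply/idP/idP; lia.
case: ltnP => Hmk /=.
  by congr (hc _); lia.
by rewrite (_ : (2 * m - 2 * k == 1)%N = false) //; apply/negP => /eqP; lia.
Qed.

Lemma phi_dep {R : realType} (hc hc' : nat -> R[i]) (a b : {poly R[i]}) (s : nat) (n : int) :
  (size b <= s)%N ->
  (forall l : nat, (0 < l)%N -> l%:Z + n <= (2 * s)%N%:Z - 2 -> hc l = hc' l) ->
  phi hc a b n = phi hc' a b n.
Proof.
move=> Hs H; rewrite /phi /spolymul; congr (_ + _); apply: eq_bigr => i _; congr (_ * _).
have Hi := ltn_ord i; move: (nat_of_ord i) Hi => j Hj.
move: (size b) Hs Hj => sb Hs Hj.
case E: (n - (2 * j)%N%:Z) => [x|x] //=.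
apply: H => //; rewrite NegzE in E; lia.
Qed.

Lemma dep {R : realType} (hc hc' : nat -> R[i]) k :
  (forall l, (1 <= l <= k.*2.+1)%N -> hc l = hc' l) ->
  Vmat hc k.*2.+1 = Vmat hc' k.*2.+1.
Proof.
move=> H.
have [sP sQ] := Vsize hc k.
have sB : (size (Vmat hc k.*2.+1 1 1)%R <= k.+1)%N by rewrite Vtrace size_polyN.
have Hag : forall (n : int), -1 <= n -> forall l : nat, (0 < l)%N ->
    l%:Z + n <= (2 * k.+1)%N%:Z - 2 -> hc l = hc' l.
  move=> n Hn l Hl1 Hl2; apply: H; apply/andP; split => //; lia.
have [e0 e1] : Vmat hc' k.*2.+1 0 0 = Vmat hc k.*2.+1 0 0 /\
               Vmat hc' k.*2.+1 0 1 = Vmat hc k.*2.+1 0 1.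
  apply: (phi_inj hc') => n.
  by rewrite -(phi_dep _ _ _ _ _ _ sQ (Hag n _)) // -!VH !Hpos.
have c1eq : coefneg (Hser hc k.*2.+1) 1 = coefneg (Hser hc' k.*2.+1) 1.
  rewrite /coefneg !VH e0 e1.
  by apply: (phi_dep _ _ _ _ _ _ sQ (Hag _ _)).
symmetry; apply: Vchar => n.
  by rewrite -(phi_dep _ _ _ _ _ _ sQ (Hag n _)) // -!VH !Hpos.
rewrite -(phi_dep _ _ _ _ _ _ sB (Hag n _)) // -VR !row2pos c1eq.
by case: ifP => // Hn; rewrite H //; apply/andP; split; lia.
Qed.

Lemma hser_neg {R : realType} (hc : nat -> R[i]) (j t : nat) :
  hser hc (- Posz j.+1 - Posz (2 * t)) = hc (2 * t + j).+1.
Proof.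
have -> : - Posz j.+1 - Posz (2 * t) = Negz (2 * t + j) by rewrite NegzE; lia.
by [].
Qed.

Lemma Qlead {R : realType} (hc : nat -> R[i]) i : (Vmat hc i.*2.+1 0 1)`_i = 1.
Proof.
have [_ sQ] := Vsize hc i.
have := Hpos hc i.*2.+1 (2 * i).+1.
rewrite VH /phi spoly_odd add0r (spolymulE _ _ _ _ sQ) big_ord_recr /= big1 ?add0r.
  rewrite hser_sub leqnSn subSnn eqxx mulr1 mul2n eqxx => ->; by [].
move=> t _; rewrite hser_sub.
have Ht := ltn_ord t; move: (nat_of_ord t) Ht => j Hj /=.
have -> : (2 * j <= (2 * i).+1)%N = true by lia.
by rewrite (_ : ((2 * i).+1 - 2 * j == 1)%N = false) ?mulr0 //; apply/negP => /eqP; lia.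
Qed.

Lemma c1_formula {R : realType} (hc : nat -> R[i]) i :
  coefneg (Hser hc i.*2.+1) 1 =
  \sum_(t < i) (Vmat hc i.*2.+1 0 1)`_t * hc (2 * t).+1 + hc (2 * i).+1.
Proof.
have [_ sQ] := Vsize hc i.
rewrite /coefneg VH /phi.
have -> : spoly (Vmat hc i.*2.+1 0 0) (- (1%N%:Z)) = 0 by [].
rewrite add0r (spolymulE _ _ _ _ sQ) big_ord_recr /= Qlead mul1r hser_neg addn0.
by congr (_ + _); apply: eq_bigr => t _; rewrite hser_neg addn0.
Qed.

Lemma c2_formula {R : realType} (hc : nat -> R[i]) i :
  coefneg (Hser hc i.*2.+1) 2 =
  \sum_(t < i) (Vmat hc i.*2.+1 0 1)`_t * hc (2 * t).+2 + hc (2 * i).+2.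
Proof.
have [_ sQ] := Vsize hc i.
rewrite /coefneg VH /phi.
have -> : spoly (Vmat hc i.*2.+1 0 0) (- (2%N%:Z)) = 0 by [].
rewrite add0r (spolymulE _ _ _ _ sQ) big_ord_recr /= Qlead mul1r hser_neg addn1.
by congr (_ + _); apply: eq_bigr => t _; rewrite hser_neg addn1.
Qed.

Lemma row2zero {R : realType} (hc : nat -> R[i]) i :
  row2ser hc i.*2.+1 (Posz 0) = hc (2 * i).+1 + coefneg (Hser hc i.*2.+1) 1.
Proof. by rewrite row2pos /= subn0 mul2n mulr1 add0r. Qed.

Lemma coef0_XC {R : realType} (p : {poly R[i]}) c : (p * 'X - c%:P)`_0 = - c.
Proof. by rewrite coefB coefMX coefC /= sub0r. Qed.

Lemma inj {R : realType} (hc hc' : nat -> R[i]) k :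
  Vmat hc k.*2.+1 = Vmat hc' k.*2.+1 ->
  forall l, (1 <= l <= k.*2.+1)%N -> hc l = hc' l.
Proof.
move=> EV.
have Ei : forall i, (i <= k)%N -> Vmat hc i.*2.+1 = Vmat hc' i.*2.+1.
  by move=> i Hi; rewrite (thm3 hc i k Hi) (thm3 hc' i k Hi) /alpha EV.
suff S : forall n, (n <= k.*2.+1)%N -> forall l, (1 <= l <= n)%N -> hc l = hc' l.
  by move=> l Hl; apply: (S k.*2.+1).
elim=> [|n IH] Hn l /andP[Hl1 Hl2]; first by exfalso; lia.
case: (ltnP l n.+1) => Hl.
  by apply: IH; [lia | apply/andP; split; lia].
have -> : l = n.+1 by lia.
have IHn := IH (ltnW Hn).
have := odd_double_half n; set i := n./2 => Hhalf.
case: (boolP (odd n)) => Hodd.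
-
  rewrite Hodd /= in Hhalf.
  have Hik : (i < k)%N by lia.
  have e1 : Vmat hc (i.*2.+1).+2 = Vmat hc' (i.*2.+1).+2 := Ei i.+1 Hik.
  have e0 := Ei i (ltnW Hik).
  have [r0 _] := Vrec hc i.*2.+1.
  have [r0' _] := Vrec hc' i.*2.+1.
  have : (Vmat hc (i.*2.+1).+2 0 0)`_0 = (Vmat hc' (i.*2.+1).+2 0 0)`_0 by rewrite e1.
  rewrite r0 r0' !coef0_XC => /oppr_inj.
  rewrite !c2_formula e0.
  have -> : \sum_(t < i) (Vmat hc' i.*2.+1 0 1)`_t * hc (2 * t).+2 =
            \sum_(t < i) (Vmat hc' i.*2.+1 0 1)`_t * hc' (2 * t).+2.
    apply: eq_bigr => t _; have Ht := ltn_ord t; move: (nat_of_ord t) Ht => j Hj.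
    by rewrite IHn //; apply/andP; split; lia.
  move/addrI; have -> : n.+1 = (2 * i).+2 by lia.
  by [].
-
  rewrite (negPf Hodd) /= in Hhalf.
  have Hik : (i <= k)%N by lia.
  have e0 := Ei i Hik.
  have [_ sQ] := Vsize hc' i.
  have sB : (size (Vmat hc' i.*2.+1 1 1)%R <= i.+1)%N by rewrite Vtrace size_polyN; have [] := Vsize hc' i.
  have := row2zero hc i; rewrite VR e0 (phi_dep _ hc' _ _ i.+1 _ sB); last first.
    move=> l' Hl'1 Hl'2; apply: IHn; apply/andP; split; lia.
  rewrite -VR row2zero !c1_formula e0.
  have -> : \sum_(t < i) (Vmat hc' i.*2.+1 0 1)`_t * hc (2 * t).+1 =
            \sum_(t < i) (Vmat hc' i.*2.+1 0 1)`_t * hc' (2 * t).+1.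
    apply: eq_bigr => t _; have Ht := ltn_ord t; move: (nat_of_ord t) Ht => j Hj.
    by rewrite IHn //; apply/andP; split; lia.
  move=> E.
  have E2 : hc' (2 * i).+1 *+ 2 = hc (2 * i).+1 *+ 2.
    rewrite !mulr2n; apply: (addrI (\sum_(t < i) (Vmat hc' i.*2.+1 0 1)`_t * hc' (2 * t).+1)).
    by rewrite addrCA E addrCA.
  have two : (2%:R : R[i]) != 0 by rewrite pnatr_eq0.
  rewrite -[hc' _ *+ 2]mulr_natl -[hc _ *+ 2]mulr_natl in E2; move/(mulfI two): E2 => E3.
  have -> : n.+1 = (2 * i).+1 by lia.
  by rewrite E3.
Qed.

Theorem mainTheorem1 (R : realType) (k : nat) :
  (* (1) dependence only on h_1..h_{2k+1}, and injectivity *)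
  (forall hc hc' : nat -> R[i],
      (forall l, (1 <= l <= k.*2.+1)%N -> hc l = hc' l) ->
      Vmat hc k.*2.+1 = Vmat hc' k.*2.+1) /\
  (forall hc hc' : nat -> R[i],
      Vmat hc k.*2.+1 = Vmat hc' k.*2.+1 ->
      forall l, (1 <= l <= k.*2.+1)%N -> hc l = hc' l) /\
  (* (2) trace zero *)
  (forall hc : nat -> R[i], \tr (Vmat hc k.*2.+1) = 0) /\
  (* (3) *)
  (forall (hc : nat -> R[i]) (i : nat), (i <= k)%N ->
      Vmat hc i.*2.+1 =
      posproj (k - i) (Vmat hc k.*2.+1) - (alpha hc i k)%:P *: E21 R).
Proof.
split; first by move=> hc hc'; apply: dep.
split; first by move=> hc hc'; apply: inj.
split; last by move=> hc i Hi; apply: thm3.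
move=> hc; rewrite /mxtrace big_ord_recl big_ord1.
have -> : lift ord0 (ord0 : 'I_1) = 1 :> 'I_2 by apply: val_inj.
have -> : (ord0 : 'I_2) = 0 by apply: val_inj.
by rewrite Vtrace subrr.
Qed.
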